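(* Let $h=0$, let $f$ satisfy Assumption A2(i), assume $a_{ij}\neq0$ for every pair $i\ne j$, and let $f^*=\inf\{f(x):a^Tx=b\}>-\infty$. Let $(p_{ij})$ be any probability distribution on ordered pairs with $p_{ij}=p_{ji}>0$ for $i\neq j$ and $p_{ii}=0$, and let $x^k$ be generated by Algorithm (2-RCD) with $h=0$ and pairs drawn i.i.d. according to $p_{ij}$. Let $Q=\sum_{i\ne j}\frac{p_{ij}}{L_{ij}}Q_{ij}$ and let $\nu_2(Q)$ be the second smallest eigenvalue of $Q$, assumed positive. Then for all $k\ge0$, $$\min_{0\le l\le k}E\left[\left(M_3(x^l,\mathbf 1)\right)^2\right]\le\frac{2\,(f(x^0)-f^* )}{\nu_2(Q)\,(k+1)}.$$
   Context: Block structure: $n=\sum_{i=1}^N n_i$ with $N\ge2$, $I_n=[U_1\ \dots\ U_N]$, $\nabla_if(x)=U_i^T\nabla f(x)$, $a_i=U_i^Ta$, $a_{ij}=[a_i^T\ a_j^T]^T$, $\nabla_{ij}f(x)=[\nabla_if(x)^T\ \nabla_jf(x)^T]^T$, $U_{ij}=[U_i\ U_j]\in\mathbb{R}^{n\times(n_i+n_j)}$. Problem: $\min\{f(x): a^Tx=b\}$ with $a\in\mathbb{R}^n$ nonzero. Assumption A2(i): $f$ is differentiable and there are constants $L_{ij}=L_{ji}>0$ with $\|\nabla_{ij}f(x+U_is_i+U_js_j)-\nabla_{ij}f(x)\|\le L_{ij}\|[s_i^T\ s_j^T]^T\|$ for all $s_i,s_j$, $x$. Algorithm (2-RCD) with $h=0$: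 given $x^0$ with $a^Tx^0=b$, for $k\ge0$ choose a random pair $(i,j)=(i_k,j_k)$, $i\ne j$, and set $x^{k+1}=x^k+U_{ij}d_{ij}$ where $d_{ij}=\arg\min\{\langle\nabla_{ij}f(x^k),s\rangle+\frac{L_{ij}}2\|s\|^2: a_{ij}^Ts=0\}=-\frac1{L_{ij}}\big(I-\frac{a_{ij}a_{ij}^T}{a_{ij}^Ta_{ij}}\big)\nabla_{ij}f(x^k)$. $Q_{ij}=U_{ij}\big(I_{n_i+n_j}-\frac{a_{ij}a_{ij}^T}{a_{ij}^Ta_{ij}}\big)U_{ij}^T\in\mathbb{R}^{n\times n}$ (symmetric positive semidefinite, $Q_{ij}a=0$). For feasible $x$, $\nabla f(x)_\perp$ denotes the orthogonal projection of $\nabla f(x)$ onto $S=\{s:a^Ts=0\}$, and $M_3(x,\mathbf 1)=\|\nabla f(x)_\perp\|$ (Euclidean norm). *)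

(* Defs.v *)
(* classical real numbers. Vectors in R^n are functions
   nat -> R, of which only the coordinates 0..n-1 are meaningful. *)
From Stdlib Require Import Reals Lra.
Open Scope R_scope.

Definition vec := nat -> R.

Fixpoint fsum (n : nat) (F : nat -> R) : R :=
  match n with
  | O => 0
  | S m => fsum m F + F m
  end.

Definition dot (n : nat) (x y : vec) : R := fsum n (fun k => x k * y k).
Definition norm (n : nat) (x : vec) : R := sqrt (dot n x x).
Definition vsub (x y : vec) : vec := fun k => x k - y k.
Definition vadd (x y : vec) : vec := fun k => x k + y k.

(* Block structure: coordinate k < n belongs to block blk k < N; blocks are
   consecutive (blk nondecreasing) and nonempty, i.e. I_n = [U_1 ... U_N]. *)
Definition block_structure (n N : nat) (blk : nat -> nat) : Prop :=
  (2 <= N)%nat /\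
  (forall k, (k < n)%nat -> (blk k < N)%nat) /\
  (forall i, (i < N)%nat -> exists k, (k < n)%nat /\ blk k = i) /\
  (forall k l, (k <= l)%nat -> (l < n)%nat -> (blk k <= blk l)%nat).

Definition inpair (blk : nat -> nat) (i j k : nat) : bool :=
  orb (Nat.eqb (blk k) i) (Nat.eqb (blk k) j).

(* U_ij U_ij^T v : keep the coordinates of blocks i, j, zero elsewhere.
   Thus norm n (proj blk i j v) = || v_ij ||. *)
Definition proj (blk : nat -> nat) (i j : nat) (v : vec) : vec :=
  fun k => if inpair blk i j k then v k else 0.

Definition has_gradient (n : nat) (f : vec -> R) (g : vec -> vec) : Prop :=
  forall x eps, 0 < eps -> exists delta, 0 < delta /\
    forall y, norm n (vsub y x) < delta ->
      Rabs (f y - f x - dot n (g x) (vsub y x)) <= eps * norm n (vsub y x).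

Definition assumption_A2i (n N : nat) (blk : nat -> nat)
    (f : vec -> R) (g : vec -> vec) (L : nat -> nat -> R) : Prop :=
  has_gradient n f g /\
  (forall i j, (i < N)%nat -> (j < N)%nat -> i <> j ->
     L i j = L j i /\ 0 < L i j) /\
  (forall i j, (i < N)%nat -> (j < N)%nat -> i <> j ->
     forall x s, (forall k, inpair blk i j k = false -> s k = 0) ->
       norm n (proj blk i j (vsub (g (vadd x s)) (g x)))
         <= L i j * norm n s).

(* One step of (2-RCD) with h = 0 on pair (i,j):
   x+ = x + U_ij d_ij,  d_ij = -(1/L_ij) (I - a_ij a_ij^T/(a_ij^T a_ij)) grad_ij f(x). *)
Definition rcd_step (n : nat) (blk : nat -> nat) (g : vec -> vec)
    (L : nat -> nat -> R) (a : vec) (x : vec) (i j : nat) : vec :=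
  let gp := proj blk i j (g x) in
  let ap := proj blk i j a in
  let c := dot n ap gp / dot n ap ap in
  fun k => x k + (- / L i j) * (gp k - c * ap k).

(* E[F(x^l)] where x^l is produced from x by l steps of (2-RCD) with the
   pairs drawn i.i.d. with probabilities p i j (finite sum over outcomes). *)
Fixpoint expect (n N : nat) (blk : nat -> nat) (g : vec -> vec)
    (L : nat -> nat -> R) (a : vec) (p : nat -> nat -> R)
    (l : nat) (F : vec -> R) (x : vec) : R :=
  match l with
  | O => F x
  | S l' => fsum N (fun i => fsum N (fun j =>
              p i j * expect n N blk g L a p l' F (rcd_step n blk g L a x i j)))
  end.

(* M_3(x, 1) = || grad f(x)_perp ||, projection onto {s : a^T s = 0}. *)
Definition M3 (n : nat) (g : vec -> vec) (a : vec) (x : vec) : R :=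
  let c := dot n a (g x) / dot n a a in
  norm n (fun k => g x k - c * a k).

(* Entries of Q_ij = U_ij (I - a_ij a_ij^T/(a_ij^T a_ij)) U_ij^T. *)
Definition Qij (n : nat) (blk : nat -> nat) (a : vec) (i j : nat)
    (k l : nat) : R :=
  if andb (inpair blk i j k) (inpair blk i j l) then
    (if Nat.eqb k l then 1 else 0)
      - a k * a l / dot n (proj blk i j a) (proj blk i j a)
  else 0.

Definition Qmat (n N : nat) (blk : nat -> nat) (a : vec)
    (p L : nat -> nat -> R) (k l : nat) : R :=
  fsum N (fun i => fsum N (fun j =>
    if Nat.eqb i j then 0 else p i j / L i j * Qij n blk a i j k l)).

(* nu is the second smallest eigenvalue (counted with multiplicity) of the
   symmetric n x n matrix M: M has an orthonormal eigenbasis V_0..V_{n-1}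
   with eigenvalues lam_0 <= ... <= lam_{n-1}, and nu = lam_1. *)
Definition second_smallest_eigenvalue (n : nat) (M : nat -> nat -> R)
    (nu : R) : Prop :=
  (2 <= n)%nat /\
  exists (lam : nat -> R) (V : nat -> vec),
    (forall m m', (m < n)%nat -> (m' < n)%nat ->
       dot n (V m) (V m') = if Nat.eqb m m' then 1 else 0) /\
    (forall m k, (m < n)%nat -> (k < n)%nat ->
       fsum n (fun l => M k l * V m l) = lam m * V m k) /\
    (forall m m', (m <= m')%nat -> (m' < n)%nat -> lam m <= lam m') /\
    nu = lam 1%nat.

(* Main.v *)
Require Import Defs.
From Stdlib Require Import Reals Lra Lia FunctionalExtensionality.
From mathcomp Require ssreflect ssrbool ssrnat bigop ssralg matrix Rstruct.
Open Scope R_scope.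
Set Bullet Behavior "Strict Subproofs".
Module MC.
Import ssreflect ssrfun ssrbool eqtype ssrnat seq fintype bigop ssralg matrix Rstruct.
Import GRing.Theory.
Local Open Scope ring_scope.
Lemma fsum_big n (F : nat -> R) : fsum n F = \sum_(i < n) F i.
Proof.
elim: n => [|n IH]; first by rewrite big_ord0.
by rewrite big_ord_recr /= IH.
Qed.

Lemma eqb_ord n (i j : 'I_n) : (if Nat.eqb i j then 1%R else 0%R) = ((i == j)%:R : R).
Proof.
case: (PeanoNat.Nat.eqb_spec i j) => e.
- by have -> : i == j by apply/eqP; apply: val_inj.
- by have -> : (i == j) = false by apply/eqP => e'; apply e; rewrite e'.
Qed.

Lemma complete n (V : nat -> vec) :
 (forall m m', lt m n -> lt m' n -> dot n (V m) (V m') = if Nat.eqb m m' then 1%R else 0%R) ->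
 forall k l, lt k n -> lt l n ->
   fsum n (fun m => Rmult (V m k) (V m l)) = if Nat.eqb k l then 1%R else 0%R.
Proof.
move=> H k l hk hl.
pose W : 'M[R]_n := \matrix_(i, j) V i j.
have WW : W *m W^T = 1%:M.
  apply/matrixP => i j; rewrite !mxE.
  transitivity (dot n (V i) (V j)).
    by rewrite /dot fsum_big; apply: eq_bigr => t _; rewrite !mxE.
  rewrite H; try (apply/ltP; exact: ltn_ord).
  exact: eqb_ord.
have := mulmx1C WW => /matrixP /(_ (Ordinal (introT ltP hk)) (Ordinal (introT ltP hl))).
rewrite !mxE => E.
rewrite fsum_big.
transitivity (((Ordinal (introT ltP hk)) == (Ordinal (introT ltP hl)))%:R : R); last first.
  by rewrite -eqb_ord.
rewrite -E; apply: eq_bigr => t _; by rewrite !mxE.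
Qed.
Lemma complete' n (V : nat -> vec) :
 (forall m m', lt m n -> lt m' n -> dot n (V m) (V m') = if Nat.eqb m m' then IZR (Zpos xH) else IZR Z0) ->
 forall k l, lt k n -> lt l n ->
   fsum n (fun m => Rmult (V m k) (V m l)) = if Nat.eqb k l then IZR (Zpos xH) else IZR Z0.
Proof. exact (@complete n V). Qed.
End MC.

Lemma fsum_ext n F G : (forall k, (k < n)%nat -> F k = G k) -> fsum n F = fsum n G.
Proof. induction n; intros H; simpl; auto. rewrite IHn by (intros; apply H; lia). rewrite (H n) by lia. auto. Qed.

Lemma fsum_lin2 n (al be : R) F G :
  fsum n (fun k => al * F k + be * G k) = al * fsum n F + be * fsum n G.
Proof. induction n; simpl; [ring|]. rewrite IHn. ring. Qed.

Lemma fsum_lin3 n (al be ga : R) F G H :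
  fsum n (fun k => al * F k + be * G k + ga * H k) = al * fsum n F + be * fsum n G + ga * fsum n H.
Proof. induction n; simpl; [ring|]. rewrite IHn. ring. Qed.

Lemma fsum_add n F G : fsum n (fun k => F k + G k) = fsum n F + fsum n G.
Proof. induction n; simpl; [ring|]. rewrite IHn. ring. Qed.

Lemma fsum_scal n (c : R) F : fsum n (fun k => c * F k) = c * fsum n F.
Proof. induction n; simpl; [ring|]. rewrite IHn. ring. Qed.

Lemma fsum_zero n F : (forall k, (k < n)%nat -> F k = 0) -> fsum n F = 0.
Proof. intros H. rewrite (fsum_ext n F (fun _ => 0)) by auto. induction n; simpl; auto. rewrite IHn; [ring|]. intros; apply H; lia. Qed.

Lemma fsum_le n F G : (forall k, (k < n)%nat -> F k <= G k) -> fsum n F <= fsum n G.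
Proof. induction n; intros H; simpl; [lra|]. pose proof (H n ltac:(lia)). pose proof (IHn ltac:(intros; apply H; lia)). lra. Qed.

Lemma fsum_nonneg n F : (forall k, (k < n)%nat -> 0 <= F k) -> 0 <= fsum n F.
Proof. intros H. replace 0 with (fsum n (fun _ => 0)). apply fsum_le; auto. apply fsum_zero; auto. Qed.

Lemma fsum_swap n m F : fsum n (fun i => fsum m (fun j => F i j)) = fsum m (fun j => fsum n (fun i => F i j)).
Proof. induction n; simpl. symmetry; apply fsum_zero; auto. rewrite IHn. rewrite <- fsum_add. auto. Qed.

Lemma fsum_delta n k F : (k < n)%nat -> fsum n (fun l => if Nat.eqb k l then F l else 0) = F k.
Proof. induction n; intros H; [lia|]. simpl. destruct (Nat.eqb_spec k n).
 - subst. rewrite fsum_zero. ring. intros l Hl. destruct (Nat.eqb_spec n l); [lia|auto].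
 - rewrite IHn by lia. ring. Qed.

Lemma fsum_ge_term n F k : (forall l, (l < n)%nat -> 0 <= F l) -> (k < n)%nat -> F k <= fsum n F.
Proof. induction n; intros H Hk; [lia|]. simpl. destruct (Nat.eq_dec k n).
 - subst. pose proof (fsum_nonneg n F ltac:(intros; apply H; lia)). lra.
 - pose proof (IHn ltac:(intros; apply H; lia) ltac:(lia)). pose proof (H n ltac:(lia)). lra. Qed.

Lemma fsum_shift k F : fsum (S k) F = F 0%nat + fsum k (fun l => F (S l)).
Proof. induction k; simpl; [ring|]. simpl in IHk. rewrite IHk. ring. Qed.

Lemma fsum_const n c : fsum n (fun _ => c) = INR n * c.
Proof. induction n; simpl fsum; [simpl; ring|]. rewrite IHn, S_INR. ring. Qed.

Lemma dot_nonneg n u : 0 <= dot n u u.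
Proof. apply fsum_nonneg. intros. apply Rle_0_sqr. Qed.

Lemma dot_sym n u v : dot n u v = dot n v u.
Proof. apply fsum_ext; intros; ring. Qed.

Lemma dot_pos n u k : (k < n)%nat -> u k <> 0 -> 0 < dot n u u.
Proof. intros Hk Hu. eapply Rlt_le_trans; [| apply (fsum_ge_term n (fun k => u k * u k) k)]; auto.
 - simpl. apply Rsqr_pos_lt. auto.
 - intros; apply Rle_0_sqr. Qed.

Lemma cauchy_schwarz n u v : dot n u v <= norm n u * norm n v.
Proof.
  assert (Hq : forall t, 0 <= dot n u u - 2 * t * dot n u v + t * t * dot n v v).
  { intro t. replace (dot n u u - 2 * t * dot n u v + t * t * dot n v v)
      with (dot n (fun k => u k - t * v k) (fun k => u k - t * v k)).
    apply dot_nonneg. unfold dot.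
    rewrite (fsum_ext n _ (fun k => 1 * (u k * u k) + (-2*t) * (u k * v k) + (t*t) * (v k * v k)))
      by (intros; ring).
    rewrite fsum_lin3. ring. }
  unfold norm. rewrite <- sqrt_mult_alt by apply dot_nonneg.
  set (A := dot n u u) in *. set (B := dot n u v) in *. set (C := dot n v v) in *.
  assert (HA : 0 <= A) by apply dot_nonneg. assert (HC : 0 <= C) by apply dot_nonneg.
  destruct (Rle_or_lt B 0). { pose proof (sqrt_pos (A * C)). lra. }
  assert (HBC : B * B <= A * C).
  { destruct (Req_dec C 0).
    - exfalso. pose proof (Hq (A / B + 1)). rewrite H0 in H1.
      assert (2 * (A / B + 1) * B = 2 * A + 2 * B) by (field; lra). lra.
    - pose proof (Hq (B / C)).
      assert (A - 2 * (B / C) * B + B / C * (B / C) * C = A - B * B / C) by (field; lra).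
      rewrite H2 in H1. assert (0 < C) by lra.
      assert (B * B / C <= A) by lra. apply Rmult_le_reg_r with (/ C). apply Rinv_0_lt_compat; lra.
      replace (A * C * / C) with A by (field; lra). unfold Rdiv in H4. lra. }
  rewrite <- (sqrt_Rsqr B) by lra. apply sqrt_le_1_alt. unfold Rsqr. lra.
Qed.

Lemma norm_scal n h s : norm n (fun k => h * s k) = Rabs h * norm n s.
Proof. unfold norm. replace (dot n (fun k => h * s k) (fun k => h * s k)) with ((h * h) * dot n s s).
 rewrite sqrt_mult_alt by apply Rle_0_sqr. rewrite <- sqrt_Rsqr_abs. auto.
 unfold dot. rewrite <- fsum_scal. apply fsum_ext; intros; ring. Qed.

Lemma norm_nonneg n s : 0 <= norm n s.
Proof. apply sqrt_pos. Qed.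

Lemma norm_sq n s : norm n s * norm n s = dot n s s.
Proof. apply sqrt_sqrt, dot_nonneg. Qed.

Lemma phi_deriv n f g (Hg : has_gradient n f g) x s t :
  derivable_pt_lim (fun t => f (fun k => x k + t * s k)) t
    (dot n (g (fun k => x k + t * s k)) s).
Proof.
  intros eps Heps. set (y0 := fun k => x k + t * s k).
  set (ns := norm n s). assert (Hns : 0 <= ns) by apply norm_nonneg.
  destruct (Hg y0 (eps / (ns + 1))) as [delta [Hd Hy]].
  { apply Rdiv_lt_0_compat; lra. }
  assert (Hd' : 0 < delta / (ns + 1)) by (apply Rdiv_lt_0_compat; lra).
  exists (mkposreal _ Hd'). intros h Hh0 Hh. simpl in Hh.
  set (y := fun k => x k + (t + h) * s k).
  assert (Ev : vsub y y0 = fun k => h * s k).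
  { unfold vsub, y, y0. apply functional_extensionality; intros; ring. }
  assert (Hn : norm n (vsub y y0) = Rabs h * ns) by (rewrite Ev; apply norm_scal).
  assert (Hlt : norm n (vsub y y0) < delta).
  { rewrite Hn. apply Rle_lt_trans with (Rabs h * (ns + 1)).
    apply Rmult_le_compat_l; [apply Rabs_pos|lra].
    apply Rmult_lt_reg_r with (/ (ns + 1)). apply Rinv_0_lt_compat; lra.
    replace (Rabs h * (ns + 1) * / (ns + 1)) with (Rabs h) by (field; lra). exact Hh. }
  specialize (Hy y Hlt). rewrite Hn in Hy.
  assert (Edot : dot n (g y0) (vsub y y0) = h * dot n (g y0) s).
  { rewrite Ev. unfold dot. rewrite <- fsum_scal. apply fsum_ext; intros; ring. }
  rewrite Edot in Hy. fold y in Hy. fold y0.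
  change (f (fun k => x k + (t + h) * s k)) with (f y).
  replace ((f y - f y0) / h - dot n (g y0) s)
    with ((f y - f y0 - h * dot n (g y0) s) / h) by (field; auto).
  unfold Rdiv. rewrite Rabs_mult, Rabs_inv.
  assert (Hah : 0 < Rabs h) by (apply Rabs_pos_lt; auto).
  apply Rmult_lt_reg_r with (Rabs h); auto.
  replace (Rabs (f y - f y0 - h * dot n (g y0) s) * / Rabs h * Rabs h)
    with (Rabs (f y - f y0 - h * dot n (g y0) s)) by (field; lra).
  eapply Rle_lt_trans; [exact Hy|].
  replace (eps / (ns + 1) * (Rabs h * ns)) with (eps * Rabs h * (ns / (ns + 1))) by (field; lra).
  rewrite <- (Rmult_1_r (eps * Rabs h)) at 2.
  apply Rmult_lt_compat_l. apply Rmult_lt_0_compat; lra.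
  apply Rmult_lt_reg_r with (ns + 1); [lra|]. replace (ns / (ns + 1) * (ns + 1)) with ns by (field; lra). lra.
Qed.

Lemma poly_deriv (D0 c t : R) :
  derivable_pt_lim (fun t => D0 * t + c * (t * t)) t (D0 + c * (2 * t)).
Proof.
  pose proof (derivable_pt_lim_plus _ _ t _ _
    (derivable_pt_lim_scal id D0 t 1 (derivable_pt_lim_id t))
    (derivable_pt_lim_scal _ c t _ (derivable_pt_lim_mult id id t 1 1 (derivable_pt_lim_id t) (derivable_pt_lim_id t)))) as H.
  unfold plus_fct, mult_real_fct, mult_fct, id in H.
  replace (D0 + c * (2 * t)) with (D0 * 1 + c * (1 * t + t * 1)) by ring. exact H.
Qed.

Lemma descent n N blk f g L (HA : assumption_A2i n N blk f g L) i j
  (Hi : (i < N)%nat) (Hj : (j < N)%nat) (Hij : i <> j) x s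
  (Hs : forall k, inpair blk i j k = false -> s k = 0) :
  f (fun k => x k + s k) <= f x + dot n (g x) s + L i j / 2 * dot n s s.
Proof.
  destruct HA as [Hg [HL Hlip]].
  set (D0 := dot n (g x) s). set (S := dot n s s). set (c := L i j / 2 * S).
  set (psi := fun t => f (fun k => x k + t * s k) - (D0 * t + c * (t * t))).
  set (psi' := fun t => dot n (g (fun k => x k + t * s k)) s - (D0 + c * (2 * t))).
  assert (Hder : forall t, 0 <= t <= 1 -> derivable_pt_lim psi t (psi' t)).
  { intros t _. apply (derivable_pt_lim_minus (fun t => f (fun k => x k + t * s k))
      (fun t => D0 * t + c * (t * t))).
    apply phi_deriv; auto. apply poly_deriv. }
  destruct (MVT_cor2 psi psi' 0 1 ltac:(lra) Hder) as [t0 [Ht0 Ht0r]].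
  assert (Hneg : psi' t0 <= 0).
  { unfold psi'.
    set (y := fun k => x k + t0 * s k).
    assert (E1 : dot n (g y) s - D0 = dot n (proj blk i j (vsub (g y) (g x))) s).
    { unfold D0, dot. rewrite (fsum_ext n (fun k => proj blk i j (vsub (g y) (g x)) k * s k)
         (fun k => 1 * (g y k * s k) + (-1) * (g x k * s k))).
      rewrite fsum_lin2. ring.
      intros k _. unfold proj, vsub. destruct (inpair blk i j k) eqn:E. ring. rewrite (Hs k E). ring. }
    assert (HL2 : norm n (proj blk i j (vsub (g y) (g x))) <= L i j * (t0 * norm n s)).
    { pose proof (Hlip i j Hi Hj Hij x (fun k => t0 * s k)) as H.
      rewrite norm_scal, Rabs_pos_eq in H by lra. apply H.
      intros k Hk. rewrite (Hs k Hk). ring. }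
    pose proof (cauchy_schwarz n (proj blk i j (vsub (g y) (g x))) s) as CS.
    pose proof (norm_nonneg n s). pose proof (norm_sq n s).
    destruct (HL i j Hi Hj Hij) as [_ HLp].
    assert (norm n (proj blk i j (vsub (g y) (g x))) * norm n s <= L i j * (t0 * norm n s) * norm n s)
      by (apply Rmult_le_compat_r; auto).
    assert (L i j * (t0 * norm n s) * norm n s = L i j * t0 * S) by (unfold S; rewrite <- norm_sq; ring).
    unfold c. lra. }
  assert (E0 : psi 0 = f x).
  { unfold psi. replace (fun k => x k + 0 * s k) with x. ring.
    apply functional_extensionality; intros; ring. }
  assert (E1 : psi 1 = f (fun k => x k + s k) - (D0 + c)).
  { unfold psi. replace (fun k => x k + 1 * s k) with (fun k => x k + s k). ring.
    apply functional_extensionality; intros; ring. }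
  unfold c in *. nra.
Qed.

Definition quad (n : nat) (M : nat -> nat -> R) (v : vec) : R :=
  fsum n (fun k => v k * fsum n (fun l => M k l * v l)).

Definition perp (n : nat) (g : vec -> vec) (a x : vec) : vec :=
  fun k => g x k - (dot n a (g x) / dot n a a) * a k.

Lemma dot_proj_r n blk i j u v : dot n u (proj blk i j v) = dot n (proj blk i j u) v.
Proof. apply fsum_ext; intros; unfold proj; destruct (inpair blk i j k); ring. Qed.

Lemma dot_proj_both n blk i j u v : dot n (proj blk i j u) (proj blk i j v) = dot n (proj blk i j u) v.
Proof. apply fsum_ext; intros; unfold proj; destruct (inpair blk i j k); ring. Qed.

Lemma Qij_apply n blk a i j v k : (k < n)%nat ->
  fsum n (fun l => Qij n blk a i j k l * v l) =
  proj blk i j v k - proj blk i j a k *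
    (dot n (proj blk i j a) v / dot n (proj blk i j a) (proj blk i j a)).
Proof.
  intros Hk. set (D := dot n (proj blk i j a) (proj blk i j a)).
  unfold Qij. fold D. destruct (inpair blk i j k) eqn:Ek; simpl.
  - rewrite (fsum_ext n _ (fun l => (if Nat.eqb k l then proj blk i j v l else 0)
        + (- (a k / D)) * (proj blk i j a l * v l))).
    + rewrite fsum_add, fsum_delta by auto. rewrite fsum_scal.
      assert (Ea : proj blk i j a k = a k) by (unfold proj; rewrite Ek; auto). rewrite Ea. unfold dot, Rdiv. ring.
    + intros l Hl. unfold proj. destruct (inpair blk i j l) eqn:El;
        destruct (Nat.eqb_spec k l); subst; unfold Rdiv; try ring.
      all: rewrite Ek in El; discriminate.
  - unfold proj at 1 2. rewrite Ek. rewrite fsum_zero. ring. intros; ring.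
Qed.

Lemma quad_Qij n blk a i j v :
  quad n (Qij n blk a i j) v =
  dot n (proj blk i j v) (proj blk i j v)
  - dot n (proj blk i j a) v / dot n (proj blk i j a) (proj blk i j a) * dot n (proj blk i j a) v.
Proof.
  unfold quad. rewrite (fsum_ext n _ (fun k => 1 * (proj blk i j v k * proj blk i j v k)
     + (- (dot n (proj blk i j a) v / dot n (proj blk i j a) (proj blk i j a))) * (proj blk i j a k * v k))).
  - rewrite fsum_lin2. change (fsum n (fun k => proj blk i j v k * proj blk i j v k)) with (dot n (proj blk i j v) (proj blk i j v)). change (fsum n (fun k => proj blk i j a k * v k)) with (dot n (proj blk i j a) v). ring.
  - intros k Hk. rewrite Qij_apply by auto. unfold proj. destruct (inpair blk i j k); ring.
Qed.

Lemma step_bound n N blk f g L a (HA : assumption_A2i n N blk f g L) i j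
  (Hi : (i < N)%nat) (Hj : (j < N)%nat) (Hij : i <> j) x
  (HD : dot n (proj blk i j a) (proj blk i j a) <> 0) :
  f (rcd_step n blk g L a x i j) <=
    f x - / (2 * L i j) * quad n (Qij n blk a i j) (perp n g a x).
Proof.
  assert (HLp : 0 < L i j) by (destruct HA as [_ [HL _]]; apply (HL i j Hi Hj Hij)).
  set (gp := proj blk i j (g x)). set (ap := proj blk i j a).
  set (D := dot n ap ap) in *. set (P := dot n ap (g x)).
  set (G2 := dot n gp gp).
  set (cc := dot n ap gp / D).
  set (s := fun k => (- / L i j) * (gp k - cc * ap k)).
  assert (Hs : forall k, inpair blk i j k = false -> s k = 0).
  { intros k Hk. unfold s, gp, ap, proj. rewrite Hk. ring. }
  pose proof (descent n N blk f g L HA i j Hi Hj Hij x s Hs) as Hd.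
  change (fun k => x k + s k) with (rcd_step n blk g L a x i j) in Hd.
  assert (F1 : dot n (g x) gp = G2).
  { unfold G2, gp. rewrite dot_proj_r, dot_proj_both. auto. }
  assert (F2 : dot n (g x) ap = P). { unfold P. apply dot_sym. }
  assert (F3 : dot n gp ap = P).
  { unfold gp, ap, P. rewrite dot_sym, dot_proj_both. auto. }
  assert (F4 : dot n ap gp = P). { rewrite dot_sym. auto. }
  assert (Ecc : cc = P / D) by (unfold cc; rewrite F4; auto).
  assert (Egs : dot n (g x) s = (- / L i j) * G2 + (/ L i j * cc) * P).
  { unfold dot at 1. rewrite (fsum_ext n _ (fun k => (- / L i j) * (g x k * gp k) + (/ L i j * cc) * (g x k * ap k))).
    rewrite fsum_lin2. rewrite <- F1, <- F2. auto.
    intros; unfold s; ring. }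
  assert (Ess : dot n s s = (/ L i j * / L i j) * G2 + (-2 * / L i j * / L i j * cc) * P
                  + (/ L i j * / L i j * cc * cc) * D).
  { unfold dot at 1. rewrite (fsum_ext n _ (fun k => (/ L i j * / L i j) * (gp k * gp k)
        + (-2 * / L i j * / L i j * cc) * (gp k * ap k) + (/ L i j * / L i j * cc * cc) * (ap k * ap k))).
    rewrite fsum_lin3. rewrite <- F3. auto.
    intros; unfold s; ring. }
  assert (Eq : quad n (Qij n blk a i j) (perp n g a x) = G2 - P / D * P).
  { rewrite quad_Qij. fold ap. fold D. set (tau := dot n a (g x) / dot n a a).
    assert (E1 : dot n ap (perp n g a x) = P - tau * D).
    { unfold dot at 1, perp. fold tau.
      rewrite (fsum_ext n _ (fun k => 1 * (ap k * g x k) + (- tau) * (ap k * a k))).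
      rewrite fsum_lin2. change (fsum n (fun k => ap k * g x k)) with P. change (fsum n (fun k => ap k * a k)) with (dot n ap a). assert (HD2 : D = dot n ap a) by (unfold D, ap; apply dot_proj_both). rewrite HD2; ring.
      intros; ring. }
    assert (E2 : dot n (proj blk i j (perp n g a x)) (proj blk i j (perp n g a x)) = G2 - 2 * tau * P + tau * tau * D).
    { unfold dot at 1. rewrite (fsum_ext n _ (fun k => 1 * (gp k * gp k) + (-2 * tau) * (gp k * ap k) + (tau * tau) * (ap k * ap k))).
      rewrite fsum_lin3. rewrite <- F3. unfold G2, D, dot. ring.
      intros k _. unfold gp, ap, proj, perp. fold tau. destruct (inpair blk i j k); ring. }
    rewrite E1, E2. field. auto. }
  rewrite Eq. rewrite Egs, Ess, Ecc in Hd.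
  replace (f x - / (2 * L i j) * (G2 - P / D * P)) with
    (f x + (- / L i j * G2 + / L i j * (P / D) * P) +
       L i j / 2 * (/ L i j * / L i j * G2 + -2 * / L i j * / L i j * (P / D) * P + / L i j * / L i j * (P / D) * (P / D) * D)).
  exact Hd. field. split; [exact HD | lra].
Qed.

Lemma fsum_mul_r n F c : fsum n F * c = fsum n (fun k => F k * c).
Proof. rewrite Rmult_comm, <- fsum_scal. apply fsum_ext; intros; ring. Qed.

Lemma swap3 n N H : fsum n (fun l => fsum N (fun i => fsum N (fun j => H l i j))) =
  fsum N (fun i => fsum N (fun j => fsum n (fun l => H l i j))).
Proof. rewrite fsum_swap. apply fsum_ext; intros. apply fsum_swap. Qed.

Lemma mul_in2 N c F : c * fsum N (fun i => fsum N (fun j => F i j)) =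
  fsum N (fun i => fsum N (fun j => c * F i j)).
Proof. rewrite <- fsum_scal. apply fsum_ext; intros. symmetry; apply fsum_scal. Qed.

Definition wgt (p L : nat -> nat -> R) i j : R := if Nat.eqb i j then 0 else p i j / L i j.

Lemma quad_Qmat n N blk a p L v :
  quad n (Qmat n N blk a p L) v =
  fsum N (fun i => fsum N (fun j => wgt p L i j * quad n (Qij n blk a i j) v)).
Proof.
  unfold quad.
  rewrite (fsum_ext n _ (fun k => fsum N (fun i => fsum N (fun j =>
     wgt p L i j * (v k * fsum n (fun l => Qij n blk a i j k l * v l)))))).
  - rewrite swap3. apply fsum_ext; intros i _. apply fsum_ext; intros j _. apply fsum_scal.
  - intros k _. rewrite (fsum_ext n _ (fun l => fsum N (fun i => fsum N (fun j =>
       wgt p L i j * (Qij n blk a i j k l * v l))))).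
    + rewrite swap3. rewrite mul_in2. apply fsum_ext; intros i _. apply fsum_ext; intros j _.
      rewrite fsum_scal. ring.
    + intros l _. unfold Qmat. rewrite fsum_mul_r. apply fsum_ext; intros i _.
      rewrite fsum_mul_r. apply fsum_ext; intros j _. unfold wgt.
      destruct (Nat.eqb i j); ring.
Qed.

Lemma Qmat_a n N blk a p L k : (k < n)%nat ->
  (forall i j, (i < N)%nat -> (j < N)%nat -> i <> j ->
     dot n (proj blk i j a) (proj blk i j a) <> 0) ->
  fsum n (fun l => Qmat n N blk a p L k l * a l) = 0.
Proof.
  intros Hk HD. rewrite (fsum_ext n _ (fun l => fsum N (fun i => fsum N (fun j =>
       wgt p L i j * (Qij n blk a i j k l * a l))))).
  - rewrite fsum_swap. apply fsum_zero; intros i Hi. rewrite fsum_swap. apply fsum_zero; intros j Hj.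
    rewrite fsum_scal, Qij_apply by auto. unfold wgt. destruct (Nat.eqb_spec i j). ring.
    rewrite <- (dot_proj_both n blk i j a a). unfold Rdiv. rewrite Rinv_r by (apply HD; auto). ring.
  - intros l _. unfold Qmat. rewrite fsum_mul_r. apply fsum_ext; intros i _.
    rewrite fsum_mul_r. apply fsum_ext; intros j _. unfold wgt.
    destruct (Nat.eqb i j); ring.
Qed.

Lemma feasible_step n blk g L a x i j :
  dot n (proj blk i j a) (proj blk i j a) <> 0 ->
  dot n a (rcd_step n blk g L a x i j) = dot n a x.
Proof.
  intros HD. unfold rcd_step, dot at 1.
  set (gp := proj blk i j (g x)). set (ap := proj blk i j a).
  set (cc := dot n ap gp / dot n ap ap).
  rewrite (fsum_ext n _ (fun k => 1 * (a k * x k) + (- / L i j) * (a k * gp k) + (/ L i j * cc) * (a k * ap k))).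
  2: intros; ring.
  rewrite fsum_lin3. fold (dot n a x). fold (dot n a gp). fold (dot n a ap).
  assert (Ea : dot n a gp = dot n ap (g x)) by (apply dot_proj_r).
  assert (Eb : dot n a ap = dot n ap ap) by (unfold ap; rewrite dot_proj_r, dot_proj_both; auto).
  assert (Ec : dot n ap gp = dot n ap (g x)) by (apply dot_proj_both).
  unfold cc. rewrite Ea, Eb, Ec.
  assert (H : dot n ap (g x) / dot n ap ap * dot n ap ap = dot n ap (g x)) by (field; exact HD).
  rewrite (Rmult_assoc (/ L i j)), H. ring.
Qed.

Lemma spectral n (Mx : nat -> nat -> R) nu a v :
  second_smallest_eigenvalue n Mx nu -> 0 < nu ->
  (exists k, (k < n)%nat /\ a k <> 0) ->
  (forall k, (k < n)%nat -> fsum n (fun l => Mx k l * a l) = 0) ->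
  dot n a v = 0 ->
  nu * dot n v v <= quad n Mx v.
Proof.
  intros [Hn2 [lam [V [Hon [Heig [Hsort Hnu]]]]]] Hnu0 [k0 [Hk0 Ha0]] HMa Hav.
  pose proof (MC.complete' n V Hon) as Hc.
  assert (Hexp : forall u k, (k < n)%nat -> u k = fsum n (fun m => dot n (V m) u * V m k)).
  { intros u k Hk.
    rewrite (fsum_ext n _ (fun m => fsum n (fun l => u l * (V m l * V m k)))).
    2: { intros m _. unfold dot. rewrite fsum_mul_r. apply fsum_ext; intros; ring. }
    rewrite fsum_swap.
    rewrite (fsum_ext n _ (fun l => if Nat.eqb k l then u l else 0)).
    - rewrite fsum_delta; auto.
    - intros l Hl. rewrite fsum_scal, Hc by auto. rewrite Nat.eqb_sym. destruct (Nat.eqb k l); ring. }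
  assert (HMu : forall u k, (k < n)%nat ->
     fsum n (fun l => Mx k l * u l) = fsum n (fun m => dot n (V m) u * (lam m * V m k))).
  { intros u k Hk.
    rewrite (fsum_ext n (fun l => Mx k l * u l) (fun l => fsum n (fun m => dot n (V m) u * (Mx k l * V m l)))).
    2: { intros l Hl. rewrite (Hexp u l Hl) at 1. rewrite <- fsum_scal. apply fsum_ext; intros; ring. }
    rewrite fsum_swap. apply fsum_ext; intros m Hm. rewrite fsum_scal, Heig; auto. }
  assert (Hbil : forall w u, dot n w u = fsum n (fun m => dot n (V m) w * dot n (V m) u)).
  { intros w u. unfold dot at 1.
    rewrite (fsum_ext n (fun k => w k * u k) (fun k => fsum n (fun m => dot n (V m) u * (V m k * w k)))).
    2: { intros k Hk. rewrite (Hexp u k Hk) at 1. rewrite Rmult_comm, fsum_mul_r. apply fsum_ext; intros; ring. }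
    rewrite fsum_swap. apply fsum_ext; intros m _. rewrite fsum_scal. unfold dot at 2. ring. }
  assert (Hquad : quad n Mx v = fsum n (fun m => dot n (V m) v * (lam m * dot n (V m) v))).
  { unfold quad.
    rewrite (fsum_ext n _ (fun k => fsum n (fun m => (dot n (V m) v * lam m) * (V m k * v k)))).
    2: { intros k Hk. rewrite HMu by auto. rewrite Rmult_comm, fsum_mul_r. apply fsum_ext; intros; ring. }
    rewrite fsum_swap. apply fsum_ext; intros m _. rewrite fsum_scal. unfold dot at 3. ring. }
  set (al := fun m => dot n (V m) a).
  assert (Hal : forall m, (m < n)%nat -> al m * lam m = 0).
  { intros m Hm.
    assert (E0 : fsum n (fun k => V m k * fsum n (fun l => Mx k l * a l)) = 0).
    { apply fsum_zero; intros k Hk. rewrite HMa by auto. ring. }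
    rewrite (fsum_ext n _ (fun k => fsum n (fun m' => (al m' * lam m') * (V m k * V m' k)))) in E0.
    2: { intros k Hk. rewrite HMu by auto. rewrite <- fsum_scal. apply fsum_ext; intros; unfold al; ring. }
    rewrite fsum_swap in E0.
    rewrite (fsum_ext n _ (fun m' => if Nat.eqb m m' then al m' * lam m' else 0)) in E0.
    - rewrite fsum_delta in E0; auto.
    - intros m' Hm'. rewrite fsum_scal. change (fsum n (fun k => V m k * V m' k)) with (dot n (V m) (V m')).
      rewrite Hon by auto. destruct (Nat.eqb m m'); ring. }
  assert (Hal1 : forall m, (1 <= m)%nat -> (m < n)%nat -> al m = 0).
  { intros m H1 Hm. pose proof (Hal m Hm). pose proof (Hsort 1%nat m H1 Hm). subst nu.
    destruct (Rmult_integral _ _ H) as [|Hl]; auto. lra. }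
  assert (Hal0 : al 0%nat <> 0).
  { intro H0. apply Ha0. rewrite (Hexp a k0 Hk0). apply fsum_zero. intros m Hm.
    destruct m. fold (al 0%nat). rewrite H0; ring. fold (al (S m)). rewrite Hal1 by lia. ring. }
  set (c := fun m => dot n (V m) v).
  assert (Hc0 : c 0%nat = 0).
  { rewrite Hbil in Hav. fold al in Hav.
    rewrite (fsum_ext n _ (fun m => if Nat.eqb 0 m then al m * c m else 0)) in Hav.
    - rewrite fsum_delta in Hav by lia. destruct (Rmult_integral _ _ Hav); auto. contradiction.
    - intros m Hm. destruct m; simpl. unfold c, al; auto. change (dot n (V (S m)) a) with (al (S m)). rewrite Hal1 by lia. ring. }
  rewrite Hquad, (Hbil v v), <- fsum_scal. apply fsum_le. intros m Hm. fold (c m).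
  destruct m. rewrite Hc0. lra.
  pose proof (Hsort 1%nat (S m) ltac:(lia) Hm). subst nu. nra.
Qed.

Lemma argmin (F : nat -> R) k : exists l, (l <= k)%nat /\ forall l', (l' <= k)%nat -> F l <= F l'.
Proof.
  induction k.
  - exists 0%nat. split; auto. intros l' H. assert (l' = 0%nat) by lia. subst. lra.
  - destruct IHk as [l [Hl Hm]]. destruct (Rle_or_lt (F l) (F (S k))).
    + exists l. split; [lia|]. intros l' H'. destruct (Nat.eq_dec l' (S k)). subst; auto. apply Hm; lia.
    + exists (S k). split; auto. intros l' H'. destruct (Nat.eq_dec l' (S k)). subst; lra.
      pose proof (Hm l' ltac:(lia)). lra.
Qed.

Lemma fsum_min k F l : (forall l', (l' < k)%nat -> F l <= F l') -> INR k * F l <= fsum k F.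
Proof. intros H. rewrite <- fsum_const. apply fsum_le. auto. Qed.

Lemma nested_lin2 N (al be : R) F G :
  fsum N (fun i => fsum N (fun j => al * F i j + be * G i j)) =
  al * fsum N (fun i => fsum N (fun j => F i j)) + be * fsum N (fun i => fsum N (fun j => G i j)).
Proof.
  rewrite (fsum_ext N _ (fun i => al * fsum N (fun j => F i j) + be * fsum N (fun j => G i j))).
  apply fsum_lin2. intros; apply fsum_lin2.
Qed.

Theorem theorem5
  (n N : nat) (blk : nat -> nat)
  (f : vec -> R) (g : vec -> vec) (L : nat -> nat -> R)
  (a : vec) (b : R) (x0 : vec) (fstar : R)
  (p : nat -> nat -> R) (nu : R) :
  block_structure n N blk ->
  assumption_A2i n N blk f g L ->
  (exists k, (k < n)%nat /\ a k <> 0) ->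
  (forall i j, (i < N)%nat -> (j < N)%nat -> i <> j ->
     exists k, (k < n)%nat /\ inpair blk i j k = true /\ a k <> 0) ->
  (* f^* = inf { f x : a^T x = b } is finite *)
  (forall x, dot n a x = b -> fstar <= f x) ->
  (forall eps, 0 < eps -> exists x, dot n a x = b /\ f x < fstar + eps) ->
  (* probability distribution on ordered pairs *)
  (forall i j, (i < N)%nat -> (j < N)%nat -> 0 <= p i j) ->
  fsum N (fun i => fsum N (fun j => p i j)) = 1 ->
  (forall i, (i < N)%nat -> p i i = 0) ->
  (forall i j, (i < N)%nat -> (j < N)%nat -> i <> j ->
     p i j = p j i /\ 0 < p i j) ->
  dot n a x0 = b ->
  second_smallest_eigenvalue n (Qmat n N blk a p L) nu ->
  0 < nu ->
  forall k : nat, exists l : nat, (l <= k)%nat /\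
    expect n N blk g L a p l (fun x => (M3 n g a x) ^ 2) x0
      <= 2 * (f x0 - fstar) / (nu * INR (S k)).
Proof.
  intros Hblk HA Ha Hpair Hfstar Hinf Hp0 Hpsum Hpii Hpsym Hx0 Heig Hnu k.
  assert (HD : forall i j, (i < N)%nat -> (j < N)%nat -> i <> j ->
     dot n (proj blk i j a) (proj blk i j a) <> 0).
  { intros i j Hi Hj Hij. destruct (Hpair i j Hi Hj Hij) as [k0 [Hk0 [Hin Hak]]].
    apply Rgt_not_eq. apply (dot_pos n _ k0 Hk0). unfold proj. rewrite Hin. auto. }
  assert (Haa : dot n a a <> 0).
  { destruct Ha as [k0 [Hk0 Hak]]. apply Rgt_not_eq. apply (dot_pos n _ k0 Hk0 Hak). }
  set (G := fun x => (M3 n g a x) ^ 2).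
  assert (HG : forall x, G x = dot n (perp n g a x) (perp n g a x)).
  { intros x. unfold G, M3, norm. simpl. rewrite Rmult_1_r, sqrt_sqrt by apply dot_nonneg. auto. }
  assert (Hq : forall x, nu * G x <= quad n (Qmat n N blk a p L) (perp n g a x)).
  { intros x. rewrite HG. apply (spectral n _ nu a); auto.
    - intros; apply Qmat_a; auto.
    - unfold dot at 1, perp.
      rewrite (fsum_ext n _ (fun k => 1 * (a k * g x k) + (- (dot n a (g x) / dot n a a)) * (a k * a k))).
      rewrite fsum_lin2. fold (dot n a (g x)). fold (dot n a a). field. auto.
      intros; ring. }
  assert (Hone : forall x, fsum N (fun i => fsum N (fun j => p i j * f (rcd_step n blk g L a x i j)))
                   <= f x - nu / 2 * G x).
  { intros x.
    apply Rle_trans with (f x * fsum N (fun i => fsum N (fun j => p i j))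
                          + (- / 2) * quad n (Qmat n N blk a p L) (perp n g a x)).
    - rewrite quad_Qmat, <- nested_lin2. apply fsum_le; intros i Hi. apply fsum_le; intros j Hj.
      unfold wgt. destruct (Nat.eqb_spec i j).
      + subst. rewrite Hpii by auto. lra.
      + pose proof (step_bound n N blk f g L a HA i j Hi Hj n0 x (HD i j Hi Hj n0)) as Hs.
        pose proof (Hp0 i j Hi Hj).
        apply Rle_trans with (p i j * (f x - / (2 * L i j) * quad n (Qij n blk a i j) (perp n g a x))).
        apply Rmult_le_compat_l; auto.
        destruct HA as [_ [HL _]]. destruct (HL i j Hi Hj n0). right. field. lra.
    - rewrite Hpsum. pose proof (Hq x). lra. }
  assert (Hmain : forall K x, dot n a x = b ->
     fsum K (fun l => expect n N blk g L a p l G x) <= 2 * (f x - fstar) / nu).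
  { induction K; intros x Hx.
    - simpl. pose proof (Hfstar x Hx). unfold Rdiv. apply Rmult_le_pos. lra.
      left; apply Rinv_0_lt_compat; auto.
    - rewrite fsum_shift.
      change (expect n N blk g L a p 0 G x) with (G x).
      change (fsum K (fun l => expect n N blk g L a p (S l) G x)) with
        (fsum K (fun l => fsum N (fun i => fsum N (fun j =>
            p i j * expect n N blk g L a p l G (rcd_step n blk g L a x i j))))).
      rewrite swap3.
      assert (Hb : fsum N (fun i => fsum N (fun j => fsum K (fun l =>
            p i j * expect n N blk g L a p l G (rcd_step n blk g L a x i j))))
          <= fsum N (fun i => fsum N (fun j =>
               (2 / nu) * (p i j * f (rcd_step n blk g L a x i j)) + (- 2 * fstar / nu) * p i j))).
      { apply fsum_le; intros i Hi. apply fsum_le; intros j Hj. rewrite fsum_scal.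
        destruct (Nat.eq_dec i j).
        - subst. rewrite Hpii by auto. lra.
        - pose proof (IHK (rcd_step n blk g L a x i j)) as IH.
          rewrite feasible_step in IH by (apply HD; auto). specialize (IH Hx).
          pose proof (Hp0 i j Hi Hj).
          apply Rle_trans with (p i j * (2 * (f (rcd_step n blk g L a x i j) - fstar) / nu)).
          apply Rmult_le_compat_l; auto. right. field. lra. }
      rewrite nested_lin2, Hpsum in Hb. pose proof (Hone x) as H1.
      assert (2 / nu * fsum N (fun i => fsum N (fun j => p i j * f (rcd_step n blk g L a x i j)))
              <= 2 / nu * (f x - nu / 2 * G x)).
      { apply Rmult_le_compat_l; auto. left. apply Rdiv_lt_0_compat; lra. }
      assert (2 / nu * (f x - nu / 2 * G x) = 2 * f x / nu - G x) by (field; lra).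
      assert (2 * (f x - fstar) / nu = 2 * f x / nu - 2 * fstar / nu) by (field; lra).
      assert (- 2 * fstar / nu * 1 = - (2 * fstar / nu)) by (field; lra).
      lra. }
  destruct (argmin (fun l => expect n N blk g L a p l G x0) k) as [l [Hl Hmin]].
  exists l. split; auto.
  pose proof (fsum_min (S k) (fun l => expect n N blk g L a p l G x0) l
      ltac:(intros; apply Hmin; lia)) as Hs.
  pose proof (Hmain (S k) x0 Hx0) as Hm.
  fold G.
  assert (Hk : 0 < INR (S k)) by (apply lt_0_INR; lia).
  replace (2 * (f x0 - fstar) / (nu * INR (S k))) with ((2 * (f x0 - fstar) / nu) / INR (S k))
    by (field; lra).
  apply Rmult_le_reg_r with (INR (S k)); auto.
  replace (2 * (f x0 - fstar) / nu / INR (S k) * INR (S k)) with (2 * (f x0 - fstar) / nu) by (field; lra).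
  lra.
Qed.
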